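(* Let $k$ be a number field with ring of integers $\mathcal{O}_k$. Let $\lambda_1,\dots,\lambda_r\in\mathcal{O}_k$ be distinct, let $n_1,\dots,n_r\ge1$ with $n=n_1+\dots+n_r$, for each $i$ let $J(\lambda_i)\in\mathrm{M}_{n_i}(k)$ be a Jordan canonical form with single eigenvalue $\lambda_i$, and let $M=\mathrm{diag}(J(\lambda_1),\dots,J(\lambda_r))$. Let $\mathfrak{s}$ be the set of sequences $\sigma=(\sigma_1,\dots,\sigma_n)$ that are permutations of the multiset in which each $\lambda_i$ appears $n_i$ times. Then for any $\sigma,\sigma'\in\mathfrak{s}$, there is an isomorphism of $k$-varieties $X_{M,\sigma,\mathrm{red}}\cong X_{M,\sigma',\mathrm{red}}$.
   Context: Let $T=(T_{i,j})_{1\le i,j\le n}$ be a matrix of indeterminates and $T^*$ its adjugate. For $\sigma\in\mathfrak{s}$, $X_{M,\sigma}$ is the closed subscheme of $\operatorname{Spec}k[T_{i,j},w]$ defined by $w\cdot\det(T)=1$, $(T^*MT)_{i,j}=0$ for $i>j$, and $(T^*MT)_{i,i}=\det(T)\cdot\sigma_i$ for all $i$. $X_{M,\sigma,\mathrm{red}}$ denotes its associated reduced scheme. *)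

(* Defs.v *)
From HB Require Import structures.
From mathcomp Require Import all_boot all_order all_algebra all_field.
From mathcomp Require Import multinomials.mpoly.
Set Implicit Arguments. Unset Strict Implicit. Unset Printing Implicit Defensive.
Import Order.TTheory GRing.Theory Num.Theory.
Local Open Scope ring_scope.

Definition algebraic_integer (k : fieldExtType rat) (x : k) : Prop :=
  exists p : {poly int}, p \is monic /\ root (map_poly intr p) x.

Definition jordan_form_single (k : fieldType) (m : nat) (lam : k) (J : 'M[k]_m) : Prop :=
  exists b : 'I_m -> bool, forall i j : 'I_m,
    J i j = (i == j)%:R * lam + ((val j == (val i).+1) && b i)%:R.

(* polynomial ring k[T_{i,j}, w] with (n*n).+1 variables *)
Definition Tvar (n : nat) (i j : 'I_n) : 'I_(n * n).+1 := lift ord_max (mxvec_index i j).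
Definition wvar (n : nat) : 'I_(n * n).+1 := ord_max.

Definition Tmx (k : fieldType) (n : nat) : 'M[{mpoly k[(n * n).+1]}]_n :=
  \matrix_(i, j) 'X_(Tvar i j).

Definition X_gens (k : fieldType) (n : nat) (M : 'M[k]_n) (sigma : 'I_n -> k)
  : seq {mpoly k[(n * n).+1]} :=
  let T := Tmx k n in
  let d := \det T in
  let A := \adj T *m map_mx (fun c => c%:MP) M *m T in
  ('X_(wvar n) * d - 1)
    :: [seq A ij.1 ij.2 | ij <- enum [set: 'I_n * 'I_n] & (val ij.2 < val ij.1)%N]
    ++ [seq A i i - d * (sigma i)%:MP | i <- enum 'I_n].

Definition in_ideal (k : fieldType) (N : nat) (gens : seq {mpoly k[N]}) (q : {mpoly k[N]}) : Prop :=
  exists c : 'I_(size gens) -> {mpoly k[N]}, q = \sum_(i < size gens) c i * gens`_i.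

Definition in_radical (k : fieldType) (N : nat) (gens : seq {mpoly k[N]}) (q : {mpoly k[N]}) : Prop :=
  exists m : nat, in_ideal gens (q ^+ m).

(* Isomorphism of the reduced affine k-schemes Spec k[x]/rad(I1) and
   Spec k[x]/rad(I2): k-algebra isomorphism of the reduced coordinate rings,
   given by polynomial substitutions f (X1 -> X2 pulls back via f) and g. *)
Definition reduced_affine_iso (k : fieldType) (N : nat) (gens1 gens2 : seq {mpoly k[N]}) : Prop :=
  exists f g : N.-tuple {mpoly k[N]},
    [/\ forall p, p \in gens2 -> in_radical gens1 (comp_mpoly f p),
        forall p, p \in gens1 -> in_radical gens2 (comp_mpoly g p),
        forall j : 'I_N, in_radical gens2 (comp_mpoly g (tnth f j) - 'X_j)
      & forall j : 'I_N, in_radical gens1 (comp_mpoly f (tnth g j) - 'X_j)].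

Definition in_frak_s (k : fieldType) (r : nat) (lam : 'I_r -> k) (ns : 'I_r -> nat)
  (sigma : 'I_(\sum_(i < r) ns i) -> k) : Prop :=
  perm_eq [seq sigma j | j <- enum 'I_(\sum_(i < r) ns i)]
          (flatten [seq nseq (ns i) (lam i) | i <- enum 'I_r]).
Arguments in_frak_s {k r} lam ns sigma.

(* Main.v *)
Require Import Defs.
From HB Require Import structures.
From mathcomp Require Import all_boot all_order all_algebra all_field.
From mathcomp Require Import multinomials.mpoly.
From mathcomp Require Import ring zify fingroup perm.
From Stdlib Require Import FunctionalExtensionality.
Set Implicit Arguments. Unset Strict Implicit. Unset Printing Implicit Defensive.
Import Order.TTheory GRing.Theory Num.Theory.
Local Open Scope ring_scope.


Section Ideal.
Variables (k : fieldType) (N : nat) (G : seq {mpoly k[N]}).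
Local Notation I := (in_ideal G).

Lemma I0 : I 0.
Proof. by exists (fun _ => 0); rewrite big1 // => j _; rewrite mul0r. Qed.

Lemma ID x y : I x -> I y -> I (x + y).
Proof.
move=> [c1 ->] [c2 ->]; exists (fun j => c1 j + c2 j).
by rewrite -big_split /=; apply: eq_bigr => j _; rewrite mulrDl.
Qed.

Lemma IMl a x : I x -> I (a * x).
Proof.
move=> [c ->]; exists (fun j => a * c j).
by rewrite mulr_sumr; apply: eq_bigr => j _; rewrite mulrA.
Qed.

Lemma IMr a x : I x -> I (x * a).
Proof. by rewrite mulrC; apply: IMl. Qed.

Lemma IN x : I x -> I (- x).
Proof. by move=> h; rewrite -mulN1r; apply: IMl. Qed.

Lemma IB x y : I x -> I y -> I (x - y).
Proof. by move=> hx hy; apply: ID => //; apply: IN. Qed.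

Lemma Igen x : x \in G -> I x.
Proof.
move=> xG; have lt : (index x G < size G)%N by rewrite index_mem.
exists (fun j => ((j : nat) == index x G)%:R).
rewrite (bigD1 (Ordinal lt)) //= eqxx mul1r nth_index // big1 ?addr0 //.
by move=> j; rewrite -val_eqE /= => /negPf ->; rewrite mul0r.
Qed.

Lemma Isum (J : finType) (F : J -> {mpoly k[N]}) : (forall j, I (F j)) -> I (\sum_j F j).
Proof. by move=> h; apply: (big_ind I I0 ID) => j _; apply: h. Qed.

Lemma Ieq x y : x = y -> I x -> I y.
Proof. by move=> ->. Qed.

Lemma Icong_mul a b a' b' : I (a - a') -> I (b - b') -> I (a * b - a' * b').
Proof.
move=> h1 h2; have -> : a * b - a' * b' = a * (b - b') + (a - a') * b' by ring.
by apply: ID; [apply: IMl | apply: IMr].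
Qed.

Lemma Icong_prod (J : finType) (F F' : J -> {mpoly k[N]}) :
  (forall j, I (F j - F' j)) -> I (\prod_j F j - \prod_j F' j).
Proof.
move=> h; apply: (big_ind2 (fun a b => I (a - b))).
- by rewrite subrr; apply: I0.
- by move=> *; apply: Icong_mul.
- by move=> j _; apply: h.
Qed.

Lemma Icong_exp a b m : I (a - b) -> I (a ^+ m - b ^+ m).
Proof.
move=> h; elim: m => [|m ih]; first by rewrite !expr0 subrr; apply: I0.
by rewrite !exprS; apply: Icong_mul.
Qed.

End Ideal.

Section Comp.
Variables (k : fieldType) (N : nat).
Implicit Types (f g : N.-tuple {mpoly k[N]}) (p : {mpoly k[N]}).

Lemma comp_comp f g p :
  comp_mpoly f (comp_mpoly g p) = comp_mpoly [tuple comp_mpoly f (tnth g j) | j < N] p.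
Proof.
rewrite [p]mpolyE.
rewrite [comp_mpoly g _]raddf_sum [comp_mpoly _ (\sum_(m <- _) _)]raddf_sum.
rewrite [RHS]raddf_sum.
apply: eq_bigr => m _ /=.
rewrite !comp_mpolyZ comp_mpolyX comp_mpolyX rmorph_prod; congr (_ *: _).
by apply: eq_bigr => i _; rewrite rmorphXn tnth_mktuple.
Qed.

Lemma comp_cong (G : seq {mpoly k[N]}) f g p :
  (forall j, in_ideal G (tnth f j - tnth g j)) ->
  in_ideal G (comp_mpoly f p - comp_mpoly g p).
Proof.
move=> h; rewrite [p]mpolyE [comp_mpoly f _]raddf_sum [comp_mpoly g _]raddf_sum -sumrB.
apply: (big_ind (in_ideal G)); [exact: I0| exact: ID|] => m _.
rewrite /= !comp_mpolyZ !comp_mpolyX -scalerBr -mul_mpolyC; apply: IMl.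
by apply: Icong_prod => i; apply: Icong_exp.
Qed.

Lemma comp_ideal (G1 G2 : seq {mpoly k[N]}) f q :
  (forall p, p \in G2 -> in_ideal G1 (comp_mpoly f p)) ->
  in_ideal G2 q -> in_ideal G1 (comp_mpoly f q).
Proof.
move=> h [c ->]; rewrite raddf_sum /=; apply: Isum => j.
by rewrite rmorphM /=; apply: IMl; apply: h; apply: mem_nth.
Qed.

Definition siso (G1 G2 : seq {mpoly k[N]}) : Prop :=
  exists f g : N.-tuple {mpoly k[N]},
    [/\ forall p, p \in G2 -> in_ideal G1 (comp_mpoly f p),
        forall p, p \in G1 -> in_ideal G2 (comp_mpoly g p),
        forall j : 'I_N, in_ideal G2 (comp_mpoly g (tnth f j) - 'X_j)
      & forall j : 'I_N, in_ideal G1 (comp_mpoly f (tnth g j) - 'X_j)].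

Lemma siso_refl G : siso G G.
Proof.
exists [tuple 'X_i | i < N], [tuple 'X_i | i < N]; split.
- by move=> p pG; rewrite comp_mpoly_id; apply: Igen.
- by move=> p pG; rewrite comp_mpoly_id; apply: Igen.
- by move=> j; rewrite comp_mpoly_id tnth_mktuple subrr; apply: I0.
- by move=> j; rewrite comp_mpoly_id tnth_mktuple subrr; apply: I0.
Qed.

Lemma siso_sym G1 G2 : siso G1 G2 -> siso G2 G1.
Proof. by move=> [f [g [h1 h2 h3 h4]]]; exists g, f; split. Qed.

Lemma siso_trans G1 G2 G3 : siso G1 G2 -> siso G2 G3 -> siso G1 G3.
Proof.
move=> [f1 [g1 [a1 b1 c1 d1]]] [f2 [g2 [a2 b2 c2 d2]]].
exists [tuple comp_mpoly f1 (tnth f2 j) | j < N], [tuple comp_mpoly g2 (tnth g1 j) | j < N].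
split.
- move=> p pG; rewrite -comp_comp; apply: (comp_ideal a1); exact: a2.
- move=> p pG; rewrite -comp_comp; apply: (comp_ideal b2); exact: b1.
- move=> j; rewrite tnth_mktuple -!comp_comp.
  have -> : comp_mpoly g2 (comp_mpoly g1 (comp_mpoly f1 (tnth f2 j))) - 'X_j =
     comp_mpoly g2 (comp_mpoly g1 (comp_mpoly f1 (tnth f2 j)) - tnth f2 j)
     + (comp_mpoly g2 (tnth f2 j) - 'X_j) by rewrite raddfB /=; ring.
  apply: ID => //; apply: (comp_ideal b2).
  rewrite comp_comp -{2}(comp_mpoly_id (tnth f2 j)); apply: comp_cong => i.
  by rewrite !tnth_mktuple.
- move=> j; rewrite tnth_mktuple -!comp_comp.
  have -> : comp_mpoly f1 (comp_mpoly f2 (comp_mpoly g2 (tnth g1 j))) - 'X_j =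
     comp_mpoly f1 (comp_mpoly f2 (comp_mpoly g2 (tnth g1 j)) - tnth g1 j)
     + (comp_mpoly f1 (tnth g1 j) - 'X_j) by rewrite raddfB /=; ring.
  apply: ID => //; apply: (comp_ideal a1).
  rewrite comp_comp -{2}(comp_mpoly_id (tnth g1 j)); apply: comp_cong => i.
  by rewrite !tnth_mktuple.
Qed.

Lemma siso_reduced G1 G2 : siso G1 G2 -> reduced_affine_iso G1 G2.
Proof.
move=> [f [g [a b c d]]]; exists f, g; split.
- by move=> p /a h; exists 1%N; rewrite expr1.
- by move=> p /b h; exists 1%N; rewrite expr1.
- by move=> j; exists 1%N; rewrite expr1.
- by move=> j; exists 1%N; rewrite expr1.
Qed.
End Comp.


Section Mx.
Variables (k : fieldType) (N n : nat) (i i' : 'I_n).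
Local Notation R := {mpoly k[N]}.
Hypothesis hii : val i' = (val i).+1.

Lemma neq_ii : i != i'.
Proof. by rewrite -val_eqE hii /= neq_ltn ltnSn. Qed.

Definition Um (x : R) : 'M[R]_n :=
  \matrix_(r, s) ((r == s)%:R + x * ((r == i) && (s == i'))%:R).

Lemma sum_delta (F : 'I_n -> R) j : \sum_t (t == j)%:R * F t = F j.
Proof.
rewrite (bigD1 j) //= eqxx mul1r big1 ?addr0 // => t /negPf ->; by rewrite mul0r.
Qed.

Lemma Um_mull x (X : 'M[R]_n) r s : (Um x *m X) r s = X r s + x * (r == i)%:R * X i' s.
Proof.
rewrite mxE.
transitivity (\sum_t ((t == r)%:R * X t s) + x * (r == i)%:R * \sum_t ((t == i')%:R * X t s)).
  rewrite mulr_sumr -big_split /=; apply: eq_bigr => t _; rewrite mxE.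
  rewrite [t == r]eq_sym; case: (r == t); case: (r == i); case: (t == i'); 
    rewrite /= ?mulr0 ?mulr1 ?mul0r ?mul1r ?addr0 ?add0r //; ring.
by rewrite (sum_delta (fun t => X t s)) (sum_delta (fun t => X t s)).
Qed.

Lemma Um_mulr x (X : 'M[R]_n) r s : (X *m Um x) r s = X r s + x * (s == i')%:R * X r i.
Proof.
rewrite mxE.
transitivity (\sum_t ((t == s)%:R * X r t) + x * (s == i')%:R * \sum_t ((t == i)%:R * X r t)).
  rewrite mulr_sumr -big_split /=; apply: eq_bigr => t _; rewrite mxE.
  case: (t == s); case: (t == i); case: (s == i');
    rewrite /= ?mulr0 ?mulr1 ?mul0r ?mul1r ?addr0 ?add0r //; ring.
by rewrite (sum_delta (fun t => X r t)) (sum_delta (fun t => X r t)).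
Qed.

Lemma conjU x (X : 'M[R]_n) r s :
  (Um (- x) *m X *m Um x) r s =
  X r s - x * (r == i)%:R * X i' s + x * (s == i')%:R * X r i
  - x ^+ 2 * (r == i)%:R * (s == i')%:R * X i' i.
Proof. rewrite Um_mulr !Um_mull; ring. Qed.

Definition Sx : 'M[R]_n := perm_mx (tperm i i').

Lemma conjS (X : 'M[R]_n) r s : (Sx *m X *m Sx) r s = X (tperm i i' r) (tperm i i' s).
Proof.
rewrite /Sx -row_permE -{2}(tpermV i i') -col_permE !mxE; by [].
Qed.

Lemma UmUm x : Um x *m Um (- x) = 1%:M.
Proof.
apply/matrixP => r s; rewrite Um_mull !mxE.
have := neq_ii; rewrite eq_sym => /negPf ->; rewrite /= mulr0 addr0.
rewrite [i' == s]eq_sym; case: (r == i); case: (s == i'); rewrite /= ?mulr0 ?mulr1 ?mul0r ?addr0 //; ring.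
Qed.

Lemma SS : Sx *m Sx = 1%:M.
Proof. by rewrite /Sx -perm_mxM tperm2 perm_mx1. Qed.

Definition PP x := Um x *m Sx *m Um x.

Lemma PPinv x : PP x *m PP (- x) = 1%:M.
Proof.
rewrite /PP !mulmxA -[Um x *m Sx *m Um x *m Um (- x)]mulmxA UmUm mulmx1.
by rewrite -[Um x *m Sx *m Sx]mulmxA SS mulmx1 UmUm.
Qed.

Lemma PPconj x (X : 'M[R]_n) : PP (- x) *m X *m PP x =
  Um (- x) *m (Sx *m (Um (- x) *m X *m Um x) *m Sx) *m Um x.
Proof. by rewrite /PP !mulmxA. Qed.

Lemma detUm x : \det (Um x) = 1.
Proof.
rewrite -det_tr det_trig.
  rewrite big1 // => r _; rewrite !mxE eqxx.
  by case: (r =P i) => [->|_]; rewrite /= ?eqxx ?(negPf neq_ii) /= ?mulr0 ?addr0.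
apply/is_trig_mxP => r s lt; rewrite !mxE.
have -> : (s == r) = false by apply/negP => /eqP e; move: lt; rewrite e ltnn.
case: eqP => [es|]; last by rewrite /= mulr0 addr0.
case: eqP => [er|]; last by rewrite /= mulr0 addr0.
by move: lt; rewrite es er hii ltnNge leqnSn.
Qed.

Lemma detS : \det Sx = -1.
Proof. by rewrite /Sx det_perm odd_tperm neq_ii expr1. Qed.

Lemma detPP x : \det (PP x) = -1.
Proof. by rewrite /PP !det_mulmx !detUm detS mulr1 mul1r. Qed.

End Mx.

Lemma map_Um (k : fieldType) (N : nat) (f : {rmorphism {mpoly k[N]} -> {mpoly k[N]}}) n (i i' : 'I_n) x :
  map_mx f (Um i i' x) = Um i i' (f x).
Proof. by apply/matrixP => r s; rewrite !mxE rmorphD rmorphM !rmorph_nat. Qed.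

Lemma map_PP (k : fieldType) (N : nat) (f : {rmorphism {mpoly k[N]} -> {mpoly k[N]}}) n (i i' : 'I_n) x :
  map_mx f (PP i i' x) = PP i i' (f x).
Proof. by rewrite /PP !map_mxM !map_Um /Sx map_perm_mx. Qed.


Section UT.
Variables (k : fieldType) (N n : nat) (G : seq {mpoly k[N]}) (i i' : 'I_n).
Hypothesis hii : val i' = (val i).+1.
Local Notation I := (in_ideal G).
Local Notation R := {mpoly k[N]}.

Definition ut (X : 'M[R]_n) := forall r s : 'I_n, (s < r)%N -> I (X r s).

Lemma Ibool (c : bool) y z : (c -> I z) -> I (y * c%:R * z).
Proof. by case: c => h; [rewrite mulr1; apply: IMl; apply: h | rewrite mulr0 mul0r; apply: I0]. Qed.

Lemma utU (x : R) (X : 'M[R]_n) : ut X -> ut (Um i i' (- x) *m X *m Um i i' x).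
Proof.
move=> uX r s lt; rewrite conjU //.
have hi : I (X i' i) by apply: uX; rewrite hii.
apply: IB; last by apply: IMl.
apply: ID; first apply: IB.
- by apply: uX.
- apply: Ibool => /eqP er; apply: uX; rewrite hii; subst r; exact: ltnW.
- apply: Ibool => /eqP es; apply: uX; subst s; move: lt; rewrite hii; exact: ltnW.
Qed.

Lemma diagU (x : R) (X : 'M[R]_n) r : ut X -> I ((Um i i' (- x) *m X *m Um i i' x) r r - X r r).
Proof.
move=> uX; rewrite conjU //.
have hi : I (X i' i) by apply: uX; rewrite hii.
have -> : X r r - x * (r == i)%:R * X i' r + x * (r == i')%:R * X r i -
  x ^+ 2 * (r == i)%:R * (r == i')%:R * X i' i - X r r =
  - (x * (r == i)%:R * X i' r) + x * (r == i')%:R * X r i -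
  x ^+ 2 * (r == i)%:R * (r == i')%:R * X i' i by ring.
apply: IB; last by apply: IMl.
apply: ID; first apply: IN.
- by apply: Ibool => /eqP ->.
- by apply: Ibool => /eqP ->.
Qed.

Lemma entryU (x : R) (X : 'M[R]_n) : (Um i i' (- x) *m X *m Um i i' x) i i' =
  X i i' - x * X i' i' + x * X i i - x ^+ 2 * X i' i.
Proof. by rewrite conjU // !eqxx /=; ring. Qed.

Lemma tperm_val (u : 'I_n) : val (tperm i i' u) =
  if val u == val i then val i' else if val u == val i' then val i else val u.
Proof.
case: tpermP => [->|->|h1 h2]; rewrite ?eqxx //.
  by rewrite hii -[X in _ == X]addn0 -addn1 eqn_add2l.
have /negPf -> : val u != val i by apply/negP => /eqP /val_inj.
by have /negPf -> : val u != val i' by apply/negP => /eqP /val_inj.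
Qed.

Lemma tperm_lt (r s : 'I_n) : (s < r)%N -> ~~ ((r == i') && (s == i)) ->
  (tperm i i' s < tperm i i' r)%N.
Proof.
rewrite !tperm_val -!val_eqE /= => lt hn; move: hn lt hii.
case: (val r =P val i') => [e1|n1]; case: (val s =P val i) => [e2|n2];
case: (val r =P val i) => [e3|n3]; case: (val s =P val i') => [e4|n4] /=;
 move=> //; simpl in *; lia.
Qed.

Lemma utS X : ut X -> I (X i i') -> ut ((Sx k N i i') *m X *m (Sx k N i i')).
Proof.
move=> uX hX r s lt; rewrite conjS.
case: (boolP ((r == i') && (s == i))) => [/andP [/eqP -> /eqP ->]|hn].
  by rewrite tpermL tpermR.
by apply: uX; apply: tperm_lt.
Qed.

Lemma mcong (X X' Y Y' : 'M[R]_n) :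
  (forall r s, I (X r s - X' r s)) -> (forall r s, I (Y r s - Y' r s)) ->
  forall r s, I ((X *m Y) r s - (X' *m Y') r s).
Proof.
move=> hX hY r s; rewrite !mxE -sumrB; apply: Isum => t.
exact: Icong_mul.
Qed.

Lemma mcong_refl (X : 'M[R]_n) r s : I (X r s - X r s).
Proof. by rewrite subrr; apply: I0. Qed.

Lemma mcongU (x y : R) : I (x - y) -> forall r s, I (Um i i' x r s - Um i i' y r s).
Proof.
move=> h r s; rewrite !mxE.
have -> : (r == s)%:R + x * ((r == i) && (s == i'))%:R -
  ((r == s)%:R + y * ((r == i) && (s == i'))%:R) = 
  (x - y) * ((r == i) && (s == i'))%:R by ring.
exact: IMr.
Qed.

Lemma mcongPP (x y : R) : I (x - y) -> forall r s, I (PP i i' x r s - PP i i' y r s).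
Proof.
move=> h; apply: mcong; last exact: mcongU.
apply: mcong; first exact: mcongU.
exact: mcong_refl.
Qed.

End UT.


Section Geo.
Variables (k : fieldType) (n : nat) (M : 'M[k]_n) (i i' : 'I_n).
Hypothesis hii : val i' = (val i).+1.
Local Notation N := (n * n).+1.
Local Notation R := {mpoly k[N]}.

Definition TT : 'M[R]_n := Tmx k n.
Definition dd : R := \det TT.
Definition ww : R := 'X_(wvar n).
Definition MM : 'M[R]_n := map_mx (fun c => c%:MP) M.
Definition AA : 'M[R]_n := \adj TT *m MM *m TT.

Definition pp (a b : k) : R := ((b - a)^-1)%:MP * ww * AA i i'.

Definition Fj (a b : k) (j : 'I_N) : R :=
  match unlift ord_max j with
  | Some m => mxvec (TT *m PP i i' (pp a b)) 0 m
  | None => - ww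
  end.

Definition FF (a b : k) : N.-tuple R := [tuple Fj a b j | j < N].

Lemma FF_T a b r s : tnth (FF a b) (Tvar r s) = (TT *m PP i i' (pp a b)) r s.
Proof. by rewrite tnth_mktuple /Fj /Tvar liftK mxvecE. Qed.

Lemma FF_w a b : tnth (FF a b) (wvar n) = - ww.
Proof. by rewrite tnth_mktuple /Fj /wvar unlift_none. Qed.

Lemma comp_X (f : N.-tuple R) j : comp_mpoly f 'X_j = tnth f j.
Proof. by rewrite comp_mpolyXU; symmetry; apply: tnth_nth. Qed.

Lemma comp_T a b : map_mx (comp_mpoly (FF a b)) TT = TT *m PP i i' (pp a b).
Proof. by apply/matrixP => r s; rewrite mxE /TT /Tmx mxE comp_X FF_T. Qed.

Lemma comp_ww a b : comp_mpoly (FF a b) ww = - ww.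
Proof. by rewrite comp_X FF_w. Qed.

Lemma comp_MM a b : map_mx (comp_mpoly (FF a b)) MM = MM.
Proof. by apply/matrixP => r s; rewrite !mxE comp_mpolyC. Qed.

Lemma comp_AA a b : map_mx (comp_mpoly (FF a b)) AA =
  \adj (TT *m PP i i' (pp a b)) *m MM *m (TT *m PP i i' (pp a b)).
Proof. by rewrite /AA !map_mxM map_mx_adj comp_T comp_MM. Qed.

Lemma comp_dd a b : comp_mpoly (FF a b) dd = - dd.
Proof. by rewrite /dd -det_map_mx comp_T det_mulmx detPP // mulrN1. Qed.

Lemma Xg_def (sigma : 'I_n -> k) : X_gens M sigma =
  (ww * dd - 1)
    :: [seq AA ij.1 ij.2 | ij <- enum [set: 'I_n * 'I_n] & (val ij.2 < val ij.1)%N]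
    ++ [seq AA r r - dd * (sigma r)%:MP | r <- enum 'I_n].
Proof. by []. Qed.

Lemma Xg_mem sigma q : q \in X_gens M sigma ->
  [\/ q = ww * dd - 1,
      exists r s : 'I_n, (s < r)%N /\ q = AA r s
    | exists r, q = AA r r - dd * (sigma r)%:MP].
Proof.
rewrite Xg_def in_cons mem_cat => /orP [/eqP -> | /orP [] /mapP [x]].
- by constructor 1.
- rewrite mem_filter => /andP [lt _] ->; constructor 2; by exists x.1, x.2.
- by move=> _ ->; constructor 3; exists x.
Qed.

Section Sig.
Variable sigma : 'I_n -> k.
Local Notation G := (X_gens M sigma).
Local Notation I := (in_ideal G).

Lemma Ie : I (ww * dd - 1).
Proof. by apply: Igen; rewrite Xg_def mem_head. Qed.

Lemma Ilow : ut G AA.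
Proof.
move=> r s lt; apply: Igen; rewrite Xg_def in_cons mem_cat; apply/orP; right.
apply/orP; left; apply/mapP; exists (r, s) => //.
by rewrite mem_filter /= lt mem_enum in_setT.
Qed.

Lemma Idiag r : I (AA r r - dd * (sigma r)%:MP).
Proof.
apply: Igen; rewrite Xg_def in_cons mem_cat; apply/orP; right.
apply/orP; right; apply/mapP; exists r => //; by rewrite mem_enum.
Qed.

End Sig.
End Geo.


Section GenRing.
Variable R : comRingType.

Lemma gen3 (x c b a y : R) : c = b -> x - y = (x - c) + (b - a) + (a - y).
Proof. by move=> ->; ring. Qed.

Lemma genB (c0 p y x z w d cb bb aa : R) : p = cb * w * c0 -> cb * (bb - aa) = 1 ->
  c0 - p * y + p * x - p ^+ 2 * z =
  c0 * (1 - w * d) - p * (y - d * bb) + p * (x - d * aa) - p ^+ 2 * z.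
Proof.
move=> -> h; have z0 : c0 * w * d * (1 - cb * (bb - aa)) = 0 by rewrite h subrr mulr0.
by rewrite -[RHS]addr0 -z0; ring.
Qed.

Lemma genQ (b1 b2 b3 b4 a1 a2 c0 p w d cb bb aa : R) : p = cb * w * c0 -> cb * (bb - aa) = 1 ->
  b1 - p * b2 + p * b3 - p ^+ 2 * b4 - c0 =
  b1 - p * (b2 - a1) - p * (a1 - d * aa) + p * (b3 - a2) + p * (a2 - d * bb)
  - p ^+ 2 * b4 + c0 * (w * d - 1).
Proof.
move=> -> h; have z0 : c0 * w * d * (1 - cb * (bb - aa)) = 0 by rewrite h subrr mulr0.
by rewrite -[LHS]addr0 -z0; ring.
Qed.
Lemma genA (a q c : R) : a = - c * q + (1 - c) * a -> a + q = (1 - c) * (a + q).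
Proof. by move=> e; rewrite {1}e; ring. Qed.
End GenRing.

Section GenMx.
Variables (R : comRingType) (n : nat).
Lemma distr_helper (c1 c2 : R) (U V X Y : 'M[R]_n) :
  (c1 *: U + c2 *: V) *m X *m Y = c1 *: (U *m X *m Y) + c2 *: (V *m X *m Y).
Proof. by rewrite !mulmxDl -!scalemxAl. Qed.

Lemma assoc_helper (U V X T P : 'M[R]_n) : U *m V *m X *m (T *m P) = U *m (V *m X *m T) *m P.
Proof. by rewrite !mulmxA. Qed.

Lemma adj_gen (T P P' X : 'M[R]_n) (w : R) : P *m P' = 1%:M -> \det P = -1 ->
  \adj (T *m P) *m X *m (T *m P) =
  (-(w * \det T)) *: (P' *m (\adj T *m X *m T) *m P)
  + (1 - w * \det T) *: (\adj (T *m P) *m X *m (T *m P)).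
Proof.
move=> hP dP.
have e2 : \adj (T *m P) *m (T *m P) = (-\det T)%:M by rewrite mul_adj_mx det_mulmx dP mulrN1.
pose T1 := T *m P; have e0 : T1 = T *m P by [].
rewrite -/T1 in e2 *; clearbody T1.
set d := \det T.
have e1 : T1 *m P' = T by rewrite e0 -mulmxA hP mulmx1.
have e3 : T *m (w *: \adj T) = (w * d)%:M.
  by rewrite -scalemxAr mul_mx_adj scale_scalar_mx.
have e4 : \adj T1 *m (w * d)%:M = (-(w * d)) *: (P' *m \adj T).
  rewrite -e3 -{1}e1 mulmxA mulmxA e2 mul_scalar_mx -!scalemxAl -scalemxAr scalerA mulNr mulrC.
  by [].
have adjE : \adj T1 = (-(w * d)) *: (P' *m \adj T) + (1 - w * d) *: \adj T1.
  by rewrite -e4 mul_mx_scalar -scalerDl addrC subrK scale1r.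
rewrite {1}adjE (distr_helper _ _ (P' *m \adj T) (\adj T1) X T1) e0.
by congr (_ *: _ + _); rewrite !mulmxA.
Qed.

Lemma genA_mx (A Q : 'M[R]_n) (c : R) r s :
  A = (- c) *: Q + (1 - c) *: A -> A r s + Q r s = (1 - c) * (A r s + Q r s).
Proof.
move/matrixP => /(_ r s); rewrite !mxE => e.
by rewrite {1}e; ring.
Qed.
End GenMx.

Section Abs.
Variables (k : fieldType) (N n : nat) (G : seq {mpoly k[N]}) (i i' : 'I_n).
Hypothesis hii : val i' = (val i).+1.
Local Notation R := {mpoly k[N]}.
Local Notation I := (in_ideal G).

Variables (A B C Q : 'M[R]_n) (w d p cb : R) (sd : 'I_n -> R).
Hypotheses (hA : ut G A) (hAd : forall r, I (A r r - d * sd r)) (he : I (w * d - 1))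
  (hp : p = cb * w * A i i') (hcb : cb * (sd i' - sd i) = 1)
  (hB : B = Um i i' (- p) *m A *m Um i i' p)
  (hC : C = Sx k N i i' *m B *m Sx k N i i')
  (hQ : Q = Um i i' (- p) *m C *m Um i i' p).

Lemma he' : I (1 - w * d).
Proof. by rewrite -opprB; apply: IN. Qed.

Lemma aB_ut : ut G B.
Proof. by rewrite hB; apply: utU. Qed.

Lemma aB_diag r : I (B r r - A r r).
Proof. by rewrite hB; apply: diagU. Qed.

Lemma aB_ii' : I (B i i').
Proof.
rewrite hB entryU (@genB _ (A i i') p (A i' i') (A i i) (A i' i) w d cb (sd i') (sd i) hp hcb).
apply: IB; last by apply: IMl; apply: hA; rewrite hii.
apply: ID; last by apply: IMl; apply: hAd.
apply: IB; last by apply: IMl; apply: hAd.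
by apply: IMl; apply: he'.
Qed.

Lemma aC_ut : ut G C.
Proof. by rewrite hC; apply: utS => //; [apply: aB_ut | apply: aB_ii']. Qed.

Lemma aQ_ut : ut G Q.
Proof. by rewrite hQ; apply: utU => //; apply: aC_ut. Qed.

Lemma aQ_diag r : I (Q r r - d * sd (tperm i i' r)).
Proof.
have cS : C r r = B (tperm i i' r) (tperm i i' r) by rewrite hC conjS.
rewrite (@gen3 _ (Q r r) (C r r) _ (A (tperm i i' r) (tperm i i' r)) _ cS).
apply: ID; first apply: ID.
- by rewrite hQ; apply: diagU => //; apply: aC_ut.
- exact: aB_diag.
- exact: hAd.
Qed.

Lemma aQ_ii' : I (Q i i' - A i i').
Proof.
have eQ : Q i i' = C i i' - p * C i' i' + p * C i i - p ^+ 2 * C i' i by rewrite hQ entryU.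
have cS r s : C r s = B (tperm i i' r) (tperm i i' s) by rewrite hC conjS.
rewrite eQ !cS tpermL tpermR.
rewrite (@genQ _ (B i' i) (B i i) (B i' i') (B i i') (A i i) (A i' i') (A i i') p
  w d cb (sd i') (sd i) hp hcb).
apply: ID; last by apply: IMl.
apply: IB; last by apply: IMl; apply: aB_ii'.
apply: ID; last by apply: IMl; apply: hAd.
apply: ID; last by apply: IMl; apply: aB_diag.
apply: IB; last by apply: IMl; apply: hAd.
apply: IB; last by apply: IMl; apply: aB_diag.
by apply: aB_ut; rewrite hii.
Qed.
End Abs.

Section Main.
Variables (k : fieldType) (n : nat) (M : 'M[k]_n) (i i' : 'I_n).
Hypothesis hii : val i' = (val i).+1.
Local Notation N := (n * n).+1.
Local Notation R := {mpoly k[N]}.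
Variable sigma : 'I_n -> k.
Hypothesis hab : sigma i != sigma i'.
Local Notation G := (X_gens M sigma).
Local Notation I := (in_ideal G).
Local Notation TT := (TT k n).
Local Notation AA := (AA M).
Local Notation dd := (dd k n).
Local Notation ww := (ww k n).
Local Notation MM := (MM M).

Definition p0 : R := pp M i i' (sigma i) (sigma i').
Definition cb : R := ((sigma i' - sigma i)^-1)%:MP.

Lemma hcb : cb * ((sigma i')%:MP - (sigma i)%:MP) = 1.
Proof.
by rewrite /cb -mpolyCB -mpolyCM mulVf ?mpolyC1 // subr_eq0 eq_sym.
Qed.

Lemma p0E : p0 = cb * ww * AA i i'.
Proof. by []. Qed.

Definition Q0 := PP i i' (- p0) *m AA *m PP i i' p0.

Lemma Q0E : Q0 = Um i i' (- p0) *m (Sx k N i i' *m (Um i i' (- p0) *m AA *m Um i i' p0)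
   *m Sx k N i i') *m Um i i' p0.
Proof. exact: PPconj. Qed.

Let sd r : R := (sigma r)%:MP.

Lemma Q_all : [/\ ut G Q0, forall r, I (Q0 r r - dd * sd (tperm i i' r)) & I (Q0 i i' - AA i i')].
Proof.
have hA := Ilow M sigma; have hAd := Idiag M sigma; have he := Ie M sigma.
split.
- exact: (aQ_ut hii hA hAd he p0E hcb erefl erefl Q0E).
- exact: (aQ_diag hii hA hAd he p0E hcb erefl erefl Q0E).
- exact: (aQ_ii' hii hA hAd he p0E hcb erefl erefl Q0E).
Qed.

Definition A1 := \adj (TT *m PP i i' p0) *m MM *m (TT *m PP i i' p0).

Lemma A1E : A1 = (-(ww * dd)) *: Q0 + (1 - ww * dd) *: A1.
Proof. have h := (@adj_gen _ _ TT (PP i i' p0) (PP i i' (- p0)) MM ww (PPinv hii p0) (detPP hii p0)).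
rewrite /A1 /Q0 /AA. exact h. Qed.

Lemma hAQ r s : I (A1 r s + Q0 r s).
Proof.
rewrite (genA_mx r s A1E).
by apply: IMr; rewrite -opprB; apply: IN; apply: Ie.
Qed.

End Main.


Section Gen6.
Variable R : comRingType.
Lemma mx_entry_eq (T : Type) m n (X Y : 'M[T]_(m, n)) r s : X = Y -> X r s = Y r s.
Proof. by move=> ->. Qed.
Lemma map_entry (T U : Type) m n (f : T -> U) (X : 'M[T]_(m, n)) r s : (map_mx f X) r s = f (X r s).
Proof. by rewrite mxE. Qed.
Lemma g_addK (x y : R) : x = (x + y) - y.
Proof. by ring. Qed.
Lemma g_diag (a d c q : R) : a - (- d) * c = (a + q) - (q - d * c).
Proof. by ring. Qed.
Lemma g_inv (c w a q b : R) : (- c) * (- w) * a - (- (c * w * b)) = c * w * (a + q) - c * w * (q - b).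
Proof. by ring. Qed.
Lemma g_one (x y o : R) : o = 1 -> x * y - 1 = - x * - y - o.
Proof. by move=> ->; ring. Qed.
End Gen6.

Section Fin.
Variables (k : fieldType) (n : nat) (M : 'M[k]_n) (i i' : 'I_n).
Hypothesis hii : val i' = (val i).+1.
Local Notation N := (n * n).+1.
Local Notation R := {mpoly k[N]}.
Variable sigma : 'I_n -> k.
Hypothesis hab : sigma i != sigma i'.
Local Notation G := (X_gens M sigma).
Local Notation I := (in_ideal G).
Local Notation TT := (TT k n).
Local Notation AA := (AA M).
Local Notation dd := (dd k n).
Local Notation ww := (ww k n).
Local Notation MM := (MM M).
Local Notation phi := (comp_mpoly (FF M i i' (sigma i) (sigma i'))).

Lemma comp_AA_entry r s : phi (AA r s) = A1 M i i' sigma r s.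
Proof.
rewrite -(map_entry phi AA r s); exact: (mx_entry_eq r s (comp_AA M i i' (sigma i) (sigma i'))).
Qed.

Lemma map_ok (sigma' : 'I_n -> k) (h : forall r, sigma' r = sigma (tperm i i' r)) q :
  q \in X_gens M sigma' -> I (phi q).
Proof.
have [Qu Qd Qii] := Q_all M hii hab.
case/Xg_mem => [->| [r [s [lt ->]]] | [r ->]].
- rewrite rmorphB rmorphM /= comp_ww comp_dd //.
  exact: (Ieq (g_one ww dd (comp_mpoly1 _)) (Ie M sigma)).
- rewrite comp_AA_entry.
  apply: (Ieq (esym (g_addK (A1 M i i' sigma r s) (Q0 M i i' sigma r s)))).
  apply: IB; [exact: hAQ | exact: Qu].
- rewrite rmorphB rmorphM /= comp_dd // comp_mpolyC comp_AA_entry h.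
  apply: (Ieq (esym (g_diag _ _ _ (Q0 M i i' sigma r r)))).
  apply: IB; [exact: hAQ | exact: Qd].
Qed.

Lemma inv_ok j :
  I (phi (tnth (FF M i i' (sigma i') (sigma i)) j) - 'X_j).
Proof.
have [Qu Qd Qii] := Q_all M hii hab.
case: (unliftP ord_max j) => [m ->|->]; last first.
  change (ord_max : 'I_N) with (wvar n); rewrite FF_w rmorphN /= comp_ww opprK.
  by rewrite subrr; apply: I0.
case/mxvec_indexP: m => r s.
change (lift ord_max (mxvec_index r s)) with (Tvar r s).
rewrite FF_T.
have E : map_mx phi (TT *m PP i i' (pp M i i' (sigma i') (sigma i))) =
   (TT *m PP i i' (p0 M i i' sigma)) *m PP i i' (phi (pp M i i' (sigma i') (sigma i))).
  by rewrite map_mxM comp_T map_PP.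
have EX : 'X_(Tvar r s) = ((TT *m PP i i' (p0 M i i' sigma)) *m PP i i' (- p0 M i i' sigma)) r s.
  by rewrite -mulmxA PPinv // mulmx1 /TT /Tmx mxE.
rewrite -(map_entry phi _ r s) (mx_entry_eq r s E) EX.
apply: mcong; first exact: mcong_refl.
apply: mcongPP.
have -> : phi (pp M i i' (sigma i') (sigma i)) =
  (- cb i i' sigma) * (- ww) * A1 M i i' sigma i i'.
  rewrite /pp rmorphM rmorphM /= comp_mpolyC comp_ww comp_AA_entry.
  by rewrite /cb -opprB invrN mpolyCN.
rewrite p0E; apply: (Ieq (esym (g_inv _ _ _ (Q0 M i i' sigma i i') _))).
by apply: IB; apply: IMl; [exact: hAQ | exact: Qii].
Qed.

End Fin.


Lemma tperm_eqn (T : finType) (a b u : T) :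
  tperm a b u = if u == a then b else if u == b then a else u.
Proof.
case: tpermP => [->|->|h1 h2]; rewrite ?eqxx //.
  by case: eqP => // ->.
by rewrite (introF eqP h1) (introF eqP h2).
Qed.

Section Final.
Variables (k : fieldType) (n : nat) (M : 'M[k]_n).
Local Notation G s := (X_gens M s).

Lemma swap_iso (i i' : 'I_n) (hii : val i' = (val i).+1) (sigma : 'I_n -> k) :
  siso (G sigma) (G (sigma \o tperm i i')).
Proof.
case: (eqVneq (sigma i) (sigma i')) => [e|hab].
  have -> : sigma \o tperm i i' = sigma.
    apply: functional_extensionality => r /=.
    by case: tpermP => [->|->|_ _] //; rewrite e.
  exact: siso_refl.
set s' := sigma \o tperm i i'.
have ei : s' i = sigma i' by rewrite /s' /= tpermL.
have ei' : s' i' = sigma i by rewrite /s' /= tpermR.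
have hab' : s' i != s' i' by rewrite ei ei' eq_sym.
have h1 : forall r, s' r = sigma (tperm i i' r) by [].
have h2 : forall r, sigma r = s' (tperm i i' r) by move=> r; rewrite /s' /= tpermK.
exists (FF M i i' (sigma i) (sigma i')), (FF M i i' (sigma i') (sigma i)); split.
- by move=> p hp; apply: (map_ok hii hab h1 hp).
- by move=> p hp; have := map_ok hii hab' h2 hp; rewrite ei ei'.
- by move=> j; have := inv_ok M hii hab' j; rewrite ei ei'.
- by move=> j; apply: (inv_ok M hii hab j).
Qed.

Lemma tperm_iso (sigma : 'I_n -> k) (x y : 'I_n) :
  siso (G sigma) (G (sigma \o tperm x y)).
Proof.
wlog lt : x y / (val x < val y)%N.
  move=> W; case: (ltngtP (val x) (val y)) => [h|h|h]; first exact: W.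
    by rewrite tpermC; apply: W.
  have -> : x = y by apply: val_inj.
  have -> : sigma \o tperm y y = sigma.
    by apply: functional_extensionality => r /=; rewrite tperm1 perm1.
  exact: siso_refl.
move: lt; have [d] := ubnP (val y - val x); elim: d sigma x y => // d IH sigma x y ltd lt.
case: (eqVneq (val y) (val x).+1) => [e|ne].
  exact: swap_iso.
have zlt : ((val y).-1 < n)%N by apply: leq_ltn_trans (ltn_ord y); rewrite leq_pred.
set z := Ordinal zlt.
have xz : (val x < val z)%N by move/eqP: ne; move: lt; rewrite /= -subn1; simpl; lia.
have zy : val y = (val z).+1 by move: lt; rewrite /= -subn1; simpl; lia.
clearbody z.
have IH1 := IH (sigma \o tperm z y) x z ltac:(move: ltd xz; rewrite zy; lia) xz.
have S1 := swap_iso zy sigma.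
have S2 := swap_iso zy ((sigma \o tperm z y) \o tperm x z).
have -> : sigma \o tperm x y = ((sigma \o tperm z y) \o tperm x z) \o tperm z y.
  apply: functional_extensionality => r /=; congr (sigma _).
  have nxz : x != z by rewrite -val_eqE neq_ltn xz.
  have nzy : z != y by rewrite -val_eqE zy neq_ltn ltnSn.
  have nxy : x != y by rewrite -val_eqE neq_ltn lt.
  have nzx : z != x by rewrite eq_sym.
  have nyz : y != z by rewrite eq_sym.
  have nyx : y != x by rewrite eq_sym.
  rewrite !tperm_eqn.
  have [e|nrz] := eqVneq r z.
    by rewrite ?e; do 4 (rewrite ?eqxx ?(negPf nxz) ?(negPf nzy) ?(negPf nxy) ?(negPf nzx) ?(negPf nyz) ?(negPf nyx) /=).
  have [e|nry] := eqVneq r y.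
    by rewrite ?e; do 4 (rewrite ?eqxx ?(negPf nxz) ?(negPf nzy) ?(negPf nxy) ?(negPf nzx) ?(negPf nyz) ?(negPf nyx) /=).
  have [e|nrx] := eqVneq r x.
    by rewrite ?e; do 4 (rewrite ?eqxx ?(negPf nxz) ?(negPf nzy) ?(negPf nxy) ?(negPf nzx) ?(negPf nyz) ?(negPf nyx) /=).
  by do 4 (rewrite ?(negPf nrz) ?(negPf nry) ?(negPf nrx) /=).
by apply: siso_trans S1 (siso_trans IH1 S2).
Qed.

Lemma perm_iso (sigma : 'I_n -> k) (s : 'S_n) :
  siso (G sigma) (G (sigma \o s)).
Proof.
have [ts -> _] := prod_tpermP s.
elim: ts sigma => [|t ts IH] sigma.
  have -> : sigma \o (\prod_(t <- [::]) tperm t.1 t.2)%g = sigma.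
    by apply: functional_extensionality => r /=; rewrite big_nil perm1.
  exact: siso_refl.
have -> : sigma \o (\prod_(t0 <- t :: ts) tperm t0.1 t0.2)%g =
  (sigma \o (\prod_(t0 <- ts) tperm t0.1 t0.2)%g) \o tperm t.1 t.2.
  by apply: functional_extensionality => r /=; rewrite big_cons permM.
exact: (siso_trans (IH sigma) (tperm_iso _ _ _)).
Qed.

Lemma perm_eq_iso (sigma sigma' : 'I_n -> k) :
  perm_eq [seq sigma' j | j <- enum 'I_n] [seq sigma j | j <- enum 'I_n] ->
  siso (G sigma) (G sigma').
Proof.
move=> pe.
have pe' : perm_eq [seq sigma' j | j <- enum 'I_n] [tuple sigma j | j < n].
  by [].
have [p hp] := tuple_permP pe'.
have -> : sigma' = sigma \o p.
  apply: functional_extensionality => r /=.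
  have := congr1 (fun s => nth (sigma r) s r) hp.
  rewrite (nth_map r) ?size_enum_ord ?ltn_ord // nth_ord_enum => ->.
  by rewrite -tnth_nth !tnth_mktuple.
exact: perm_iso.
Qed.
End Final.

Unset Implicit Arguments.

Theorem proposition4p3 (k : fieldExtType rat) (r : nat)
  (lam : 'I_r -> k) (ns : 'I_r -> nat)
  (J : forall i : 'I_r, 'M[k]_(ns i))
  (sigma sigma' : 'I_(\sum_(i < r) ns i) -> k) :
  (forall i, algebraic_integer (lam i)) ->
  injective lam ->
  (forall i, (1 <= ns i)%N) ->
  (forall i, jordan_form_single (lam i) (J i)) ->
  in_frak_s lam ns sigma ->
  in_frak_s lam ns sigma' ->
  reduced_affine_iso (X_gens (\mxdiag_(i < r) J i) sigma)
                     (X_gens (\mxdiag_(i < r) J i) sigma').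
Proof.
move=> _ _ _ _ h1 h2.
apply: siso_reduced; apply: perm_eq_iso.
rewrite /in_frak_s in h1 h2.
by apply: (perm_trans h2); rewrite perm_sym.
Qed.
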